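(* Let $\sigma(x,y)=(x\rightharpoonup y,x\leftharpoonup y)$ be a left-non-degenerate involutive quiver-theoretic Yang--Baxter map on a quiver $\mathscr{A}$ over $\Lambda$. For $x,y\in\mathscr{A}$ with $\mathfrak{s}(x)=\mathfrak{s}(y)$ set $x\star y:=(x\rightharpoonup\cdot)^{-1}(y)$. Then $(\mathscr{A},\star)$ is a left-non-degenerate weak RC-system, and $x\star y$ is defined whenever $\mathfrak{s}(x)=\mathfrak{s}(y)$.
   Context: A quiver over $\Lambda$ has source/target maps $\mathfrak{s},\mathfrak{t}$; $Q(\lambda,\Lambda)$ denotes arrows with source $\lambda$, $Q(\Lambda,\mu)$ arrows with target $\mu$. A quiver-theoretic Yang--Baxter map is a source/target-preserving map $\sigma$ on composable pairs $\mathscr{A}\otimes\mathscr{A}$ satisfying $(\sigma\otimes\mathrm{id})(\mathrm{id}\otimes\sigma)(\sigma\otimes\mathrm{id})=(\mathrm{id}\otimes\sigma)(\sigma\otimes\mathrm{id})(\mathrm{id}\otimes\sigma)$; involutive: $\sigma^2=\mathrm{id}$; left-non-degenerate: each $x\rightharpoonup\cdot\colon\mathscr{A}(\mathfrak{t}(x),\Lambda)\to\mathscr{A}(\mathfrak{s}(x),\Lambda)$ is bijective. A weak RC-system $(Q,\star)$ is a quiver $Q$ with a partially defined binary operation $\star$ such that: $x\star y$ is defined only if $\mathfrak{s}(x)=\mathfrak{s}(y)$; whenever $x\star y$ is defined, $y\star x$ is defined, $\mathfrak{s}(x\star y)=\mathfrak{t}(x)$, $\mathfrak{s}(y\star x)=\mathfrak{t}(y)$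 and $\mathfrak{t}(x\star y)=\mathfrak{t}(y\star x)$; and whenever $x\star y$, $x\star z$, $(x\star y)\star(x\star z)$ are defined, then $y\star z$ and $(y\star x)\star(y\star z)$ are defined and $(x\star y)\star(x\star z)=(y\star x)\star(y\star z)$ (RC-law). It is left-non-degenerate if every map $x\star\cdot\colon Q(\mathfrak{s}(x),\Lambda)\to Q(\mathfrak{t}(x),\Lambda)$ is a bijection. *)

(* Defs.v *)
From Stdlib Require Import ClassicalEpsilon.

Set Implicit Arguments.

(* A quiver-theoretic map sigma on composable pairs is given by its two
   components  sigma(x,y) = (lact x y, ract x y)  (only their values on
   composable pairs matter). *)

Definition composable (Lam A : Type) (s t : A -> Lam) (x y : A) : Prop :=
  t x = s y.

Definition preserves_st (Lam A : Type) (s t : A -> Lam)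
  (lact ract : A -> A -> A) : Prop :=
  forall x y, t x = s y ->
    s (lact x y) = s x /\ t (lact x y) = s (ract x y) /\ t (ract x y) = t y.

(* (sigma (x) id)(id (x) sigma)(sigma (x) id) = (id (x) sigma)(sigma (x) id)(id (x) sigma)
   on composable triples. *)
Definition braid_relation (Lam A : Type) (s t : A -> Lam)
  (lact ract : A -> A -> A) : Prop :=
  forall x y z, t x = s y -> t y = s z ->
    let a := lact x y in
    let b := lact (ract x y) z in
    let c := ract (ract x y) z in
    let a' := lact y z in
    let b' := ract y z in
    (lact a b, ract a b, c)
    = (lact x a', lact (ract x a') b', ract (ract x a') b').

Definition quiver_YB_map (Lam A : Type) (s t : A -> Lam)
  (lact ract : A -> A -> A) : Prop :=
  preserves_st s t lact ract /\ braid_relation s t lact ract.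

Definition involutive_map (Lam A : Type) (s t : A -> Lam)
  (lact ract : A -> A -> A) : Prop :=
  forall x y, t x = s y ->
    lact (lact x y) (ract x y) = x /\ ract (lact x y) (ract x y) = y.

Definition left_nondegenerate_map (Lam A : Type) (s t : A -> Lam)
  (lact : A -> A -> A) : Prop :=
  forall x,
    (forall y1 y2, s y1 = t x -> s y2 = t x -> lact x y1 = lact x y2 -> y1 = y2) /\
    (forall z, s z = s x -> exists y, s y = t x /\ lact x y = z).

(* Weak RC-system: partial binary operation op (None = undefined). *)
Definition weak_RC_system (Lam A : Type) (s t : A -> Lam)
  (op : A -> A -> option A) : Prop :=
  (forall x y u, op x y = Some u -> s x = s y) /\
  (forall x y u, op x y = Some u ->
     exists v, op y x = Some v /\ s u = t x /\ s v = t y /\ t u = t v) /\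
  (forall x y z a b c, op x y = Some a -> op x z = Some b -> op a b = Some c ->
     exists e d, op y x = Some e /\ op y z = Some d /\ op e d = Some c).

Definition left_nondegenerate_RC (Lam A : Type) (s t : A -> Lam)
  (op : A -> A -> option A) : Prop :=
  forall x,
    (forall y, s y = s x -> exists z, op x y = Some z /\ s z = t x) /\
    (forall y1 y2 z, s y1 = s x -> s y2 = s x ->
        op x y1 = Some z -> op x y2 = Some z -> y1 = y2) /\
    (forall w, s w = t x -> exists y, s y = s x /\ op x y = Some w).

Definition star (Lam A : Type) (s t : A -> Lam) (lact : A -> A -> A)
  (x y : A) : option A :=
  match excluded_middle_informative
          (s x = s y /\ exists z, s z = t x /\ lact x z = y) with
  | left H =>
      Some (proj1_sig (constructive_indefinite_description _ (proj2 H)))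
  | right _ => None
  end.

(* Main.v *)
Require Import Defs.
From Stdlib Require Import ClassicalEpsilon.

Lemma star_some (Lam A : Type) (s t : A -> Lam) (lact : A -> A -> A) x y z :
  star s t lact x y = Some z -> s x = s y /\ s z = t x /\ lact x z = y.
Proof.
  unfold star. destruct excluded_middle_informative as [H|H]; [|discriminate].
  destruct (constructive_indefinite_description _ _) as [w [Hw1 Hw2]]; simpl.
  intros E; injection E; intros <-. destruct H; auto.
Qed.

Lemma star_intro (Lam A : Type) (s t : A -> Lam) (lact : A -> A -> A) x y z :
  left_nondegenerate_map s t lact ->
  s x = s y -> s z = t x -> lact x z = y -> star s t lact x y = Some z.
Proof.
  intros ND H1 H2 H3. unfold star.
  destruct excluded_middle_informative as [H|H].
  - destruct (constructive_indefinite_description _ _) as [w [Hw1 Hw2]]; simpl.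
    f_equal. apply (proj1 (ND x)); congruence.
  - exfalso; apply H; split; [exact H1| exists z; auto].
Qed.

Lemma star_ex (Lam A : Type) (s t : A -> Lam) (lact : A -> A -> A) x y :
  left_nondegenerate_map s t lact ->
  s x = s y -> exists z, star s t lact x y = Some z.
Proof.
  intros ND H. destruct (proj2 (ND x) y (eq_sym H)) as [z [Hz1 Hz2]].
  exists z. apply star_intro; auto.
Qed.

Theorem proposition5p1 (Lam A : Type) (s t : A -> Lam)
  (lact ract : A -> A -> A) :
  quiver_YB_map s t lact ract ->
  involutive_map s t lact ract ->
  left_nondegenerate_map s t lact ->
  weak_RC_system s t (star s t lact) /\
  left_nondegenerate_RC s t (star s t lact) /\
  (forall x y, s x = s y -> exists z, star s t lact x y = Some z).
Proof.
  intros [PS BR] INV ND.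
  assert (SW : forall x y u, star s t lact x y = Some u ->
             star s t lact y x = Some (ract x u)).
  { intros x y u Hu. apply star_some in Hu as [H1 [H2 H3]].
    destruct (PS x u (eq_sym H2)) as [P1 [P2 P3]].
    destruct (INV x u (eq_sym H2)) as [I1 I2].
    apply star_intro; auto; subst y; auto. }
  split; [|split].
  - split; [|split].
    + intros x y u H. apply star_some in H; tauto.
    + intros x y u H. exists (ract x u). split; [apply SW; auto|].
      apply star_some in H as [H1 [H2 H3]].
      destruct (PS x u (eq_sym H2)) as [P1 [P2 P3]].
      subst y. auto.
    + intros x y z a b c Ha Hb Hc.
      pose proof (SW _ _ _ Ha) as He.
      apply star_some in Ha as [A1 [A2 A3]].
      apply star_some in Hb as [B1 [B2 B3]].
      apply star_some in Hc as [C1 [C2 C3]].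
      destruct (@star_ex _ _ s t lact y z ND ltac:(congruence)) as [d Hd].
      exists (ract x a), d. split; [exact He| split; [exact Hd|]].
      apply star_some in Hd as [D1 [D2 D3]].
      destruct (PS x a (eq_sym A2)) as [P1 [P2 P3]].
      pose proof (BR x a c (eq_sym A2) (eq_sym C2)) as B. simpl in B.
      injection B; intros _ _ Bk.
      destruct (PS (ract x a) c ltac:(congruence)) as [Q1 [Q2 Q3]].
      apply star_intro; auto; try congruence.
      apply (proj1 (ND y)); try congruence.
  - intros x. split; [|split].
    + intros y Hy. destruct (@star_ex _ _ s t lact x y ND (eq_sym Hy)) as [z Hz].
      exists z; split; auto. apply star_some in Hz; tauto.
    + intros y1 y2 z _ _ H1 H2. apply star_some in H1. apply star_some in H2.
      destruct H1 as [_ [_ <-]]; destruct H2 as [_ [_ <-]]; reflexivity.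
    + intros w Hw. destruct (PS x w (eq_sym Hw)) as [P1 _].
      exists (lact x w). split; auto. apply star_intro; auto.
  - intros x y H. apply star_ex; auto.
Qed.
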